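(* There is a family of finite labeled prime event structures $(\mathcal{E}_n)_{n\ge1}$ with event sets $E_n$ such that $|E_n|=n+1$, $|\mathcal{L}(\mathcal{E}_n)|=n!$, and the automaton encoding $\mathcal{A}^{\mathcal{E}_n}$ has exactly $|Q^{\mathcal{E}_n}|=2^n+1$ states. Moreover, every nondeterministic finite automaton $\mathcal{A}$ with $\mathcal{L}(\mathcal{A})=\mathcal{L}(\mathcal{E}_n)$ has at least $2^n$ states.
   Context: A finite $\mathcal{X}$-labeled prime event structure is $\mathcal{E}=\langle E,<,\#,h\rangle$ with finite $E$, strict partial order $<$, labeling $h:E\to\mathcal{X}$, and a symmetric irreflexive conflict relation $\#$ closed under $<$ (if $e\#e'$ and $e'<e''$ then $e\#e''$); $\mathcal{X}$ contains $\varepsilon$ denoting the empty word; there is an event $\bot$ with nothing below it, $\bot<e$ for all other $e$, $h(\bot)=\varepsilon$. A configuration is a left-closed, conflict-free subset of $E$; maximal if no configuration strictly contains it. A trace of a configuration $C$ lists every event of $C$ exactly once respecting $<$; $\mathcal{L}(\mathcal{E})$ is the set of words $h(t)$ (pointwise labels, $\varepsilon$ omitted) for traces $t$ of maximal configurations. The automaton encoding of $\mathcal{E}$ is the NFA $\mathcal{A}^{\mathcal{E}}=\langle Q^{\mathcal{E}},\mathcal{X},\delta^{\mathcal{E}},q_0,F\rangle$ with $Q^{\mathcal{E}}=\{q_C\mid C$ a configuration of $\mathcal{E}\}$, $(q_{C_1},\sigma,q_{C_2})\in\delta^{\mathcal{E}}$ iff there is $e\in E$ with $C_1\cup\{e\}=C_2$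 and $h(e)=\sigma$ (transitions labeled $\varepsilon$ are $\varepsilon$-moves), initial state $q_{\{\bot\}}$, and accepting states $F=\{q_C\mid C$ maximal$\}$. *)

(* Defs.v *)
From mathcomp Require Import all_boot.
Set Implicit Arguments. Unset Strict Implicit. Unset Printing Implicit Defensive.

(* The label alphabet X is  option Sigma : [None] plays the role of epsilon. *)

Record pes (Sigma : finType) := Pes {
  ev : finType;
  evlt : rel ev;
  evcf : rel ev;
  lab : ev -> option Sigma;
  evbot : ev;
  evlt_irr : forall e, ~~ evlt e e;
  evlt_trans : forall e1 e2 e3, evlt e1 e2 -> evlt e2 e3 -> evlt e1 e3;
  evcf_sym : forall e e', evcf e e' = evcf e' e;
  evcf_irr : forall e, ~~ evcf e e;
  evcf_inherit : forall e e' e'', evcf e e' -> evlt e' e'' -> evcf e e'';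
  evbot_min : forall e, ~~ evlt e evbot;
  evbot_below : forall e, e != evbot -> evlt evbot e;
  lab_bot : lab evbot = None
}.

Section PES.
Variables (Sigma : finType) (P : pes Sigma).

Definition is_config (C : {set ev P}) : bool :=
  [forall e, forall e', ((e' \in C) && evlt e e') ==> (e \in C)] &&
  [forall e, forall e', ((e \in C) && (e' \in C)) ==> ~~ evcf e e'].

Definition is_max_config (C : {set ev P}) : bool :=
  is_config C && [forall D : {set ev P}, (is_config D && (C \subset D)) ==> (D == C)].

Definition is_trace (C : {set ev P}) (t : seq (ev P)) : Prop :=
  uniq t /\ (forall e, (e \in t) = (e \in C)) /\
  (forall i j, i < j -> j < size t -> ~~ evlt (nth (evbot P) t j) (nth (evbot P) t i)).

Definition trace_word (t : seq (ev P)) : seq Sigma := pmap (@lab _ P) t.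

Definition pes_lang (w : seq Sigma) : Prop :=
  exists C t, is_max_config C /\ is_trace C t /\ w = trace_word t.

Definition enc_Q : finType := {C : {set ev P} | is_config C}.

Lemma config_bot : is_config [set evbot P].
Proof.
apply/andP; split; apply/forallP=> e; apply/forallP=> e'.
- apply/implyP=> /andP[]; rewrite in_set1 => /eqP-> Hlt.
  by move: (evbot_min e); rewrite Hlt.
- apply/implyP=> /andP[]; rewrite !in_set1 => /eqP-> /eqP->; exact: evcf_irr.
Qed.

Definition enc_q0 : enc_Q := exist _ [set evbot P] config_bot.

Definition enc_delta (C1 : enc_Q) (a : option Sigma) (C2 : enc_Q) : bool :=
  [exists e, (e \notin val C1) && (val C2 == e |: val C1) && (lab e == a)].

Definition enc_F (C : enc_Q) : bool := is_max_config (val C).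

End PES.

Record nfa (Sigma : finType) := Nfa {
  nfa_Q : finType;
  nfa_delta : nfa_Q -> option Sigma -> nfa_Q -> bool;
  nfa_q0 : nfa_Q;
  nfa_F : pred nfa_Q
}.

Definition nfa_lang (Sigma : finType) (A : nfa Sigma) (w : seq Sigma) : Prop :=
  exists s : seq (option Sigma * nfa_Q A),
    path (fun p q => nfa_delta p.2 q.1 q.2) (None, @nfa_q0 _ A) s /\
    @nfa_F _ A (last (@nfa_q0 _ A) (map snd s)) /\
    w = pmap fst s.

Definition enc_nfa (Sigma : finType) (P : pes Sigma) : nfa Sigma :=
  @Nfa Sigma (enc_Q P) (@enc_delta _ P) (enc_q0 P) (@enc_F _ P).

Definition has_card (T : eqType) (L : T -> Prop) (k : nat) : Prop :=
  exists s : seq T, uniq s /\ size s = k /\ (forall w, L w <-> w \in s).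

(* Main.v *)
Require Import Defs.
From mathcomp Require Import all_boot.
From Stdlib Require Import ClassicalEpsilon.
Set Implicit Arguments. Unset Strict Implicit. Unset Printing Implicit Defensive.

Section Constr.
Variable n : nat.
Definition ltn' (x y : option 'I_n) : bool := (x == None) && (y != None).
Definition cfn (x y : option 'I_n) : bool := false.

Lemma p1 e : ~~ ltn' e e. Proof. by rewrite /ltn'; case: e. Qed.
Lemma p2 e1 e2 e3 : ltn' e1 e2 -> ltn' e2 e3 -> ltn' e1 e3.
Proof. by rewrite /ltn' => /andP[_ /negbTE ->]. Qed.
Lemma p3 e e' : cfn e e' = cfn e' e. Proof. by []. Qed.
Lemma p4 e : ~~ cfn e e. Proof. by []. Qed.
Lemma p5 e e' e'' : cfn e e' -> ltn' e' e'' -> cfn e e''. Proof. by []. Qed.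
Lemma p6 e : ~~ ltn' e None. Proof. by rewrite /ltn' andbF. Qed.
Lemma p7 e : e != None -> ltn' None e. Proof. by rewrite /ltn' eqxx. Qed.

Definition Pn : pes 'I_n :=
  @Pes 'I_n (option 'I_n : finType) ltn' cfn id None p1 p2 p3 p4 p5 p6 p7 erefl.

Lemma config_iff (C : {set option 'I_n}) :
  @is_config _ Pn C = (C == set0) || (None \in C).
Proof.
apply/idP/idP.
- case/andP => /forallP H _.
  case: (set_0Vmem C) => [->|[x xC]]; first by rewrite eqxx.
  apply/orP; right; case: x xC => [i|] xC //.
  by move: (H None) => /forallP /(_ (Some i)); rewrite xC.
- case/orP => [/eqP->|HN]; apply/andP; split; apply/forallP=> e; apply/forallP=> e';
    apply/implyP => //.
  + by rewrite in_set0.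
  + by move=> /andP[_ /andP[/eqP -> _]].
Qed.

Lemma max_iff (C : {set option 'I_n}) : @is_max_config _ Pn C = (C == setT).
Proof.
apply/idP/idP.
- case/andP => _ /forallP /(_ setT); rewrite config_iff inE orbT subsetT /=.
  by move/eqP => <-.
- move/eqP => ->; apply/andP; split; first by rewrite config_iff inE orbT.
  apply/forallP => D; apply/implyP => /andP[_ H]; rewrite eqEsubset H subsetT //.
Qed.


Lemma all_mem_size (w : seq 'I_n) : uniq w -> size w = n -> forall i, i \in w.
Proof.
move=> Hu Hs i.
have Hle : size (enum 'I_n) <= size w by rewrite size_enum_ord Hs.
have [_ H] := @uniq_min_size _ w (enum 'I_n) Hu (fun x _ => mem_enum _ x) Hle.
by rewrite H mem_enum.
Qed.

Lemma lang_iff w : @pes_lang _ Pn w <-> uniq w /\ size w = n.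
Proof.
split.
- move=> [C [t [HC [[Hu [Hm _]] ->]]]].
  move: HC; rewrite max_iff => /eqP HC; subst C.
  have Hu' : uniq (trace_word t).
    by apply: (@pmap_uniq _ _ _ Some) => //; case.
  split => //.
  have Hall : forall i, i \in trace_word t.
    by move=> i; rewrite /trace_word mem_pmap map_id Hm inE.
  have Hp : perm_eq (trace_word t) (enum 'I_n).
    by apply: uniq_perm => //; [exact: enum_uniq | move=> x; rewrite mem_enum Hall].
  by rewrite (perm_size Hp) size_enum_ord.
- move=> [Hu Hs].
  exists setT, (None :: map Some w); split; first by rewrite max_iff.
  split; last first.
    rewrite /trace_word /=; elim: (w) => //= a s {1}->; by [].
  split.
    by rewrite /= map_inj_uniq ?Hu ?andbT //; [apply/mapP; case | exact: Some_inj].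
  split.
    move=> e; rewrite in_setT in_cons; case: e => [i|] //=.
    by rewrite (mem_map Some_inj); exact: all_mem_size.
  move=> i [|j]; first by rewrite ltn0.
  move=> _ /= Hj; rewrite /ltn'.
  case E: (nth None (map Some w) j) => [x|] //=.
  have := mem_nth None Hj; rewrite E => /mapP [? _ //].
Qed.

Lemma card_sets_ord : #|{set 'I_n}| = 2 ^ n.
Proof.
have := card_powerset [set: 'I_n]; rewrite cardsT card_ord => <-.
rewrite -cardsT; apply: eq_card => B.
by rewrite !inE subsetT.
Qed.

Definition addN (S : {set 'I_n}) : {set option 'I_n} := None |: (Some @: S).

Lemma addN_inj : injective addN.
Proof.
move=> S T H; apply/setP => i.
have : (Some i \in addN S) = (Some i \in addN T) by rewrite H.
by rewrite !in_setU1 /= !(mem_imset _ _ Some_inj).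
Qed.

Lemma card_Q : #|enc_Q Pn| = 2 ^ n + 1.
Proof.
rewrite card_sig.
have -> : #|[pred C | @is_config _ Pn C]| = #|set0 |: (addN @: setT)|.
  apply: eq_card => C; rewrite !inE config_iff; congr (_ || _).
  apply/idP/imsetP.
  - move=> HN; exists [set i | Some i \in C]; first by [].
    apply/setP => -[i|]; rewrite /addN in_setU1 //= (mem_imset _ _ Some_inj) inE //.
  - by move=> [S _ ->]; rewrite /addN in_setU1 eqxx.
rewrite cardsU1 card_imset; last exact: addN_inj.
rewrite cardsT card_sets_ord addnC; congr (_ + _).
apply/eqP; rewrite eqb1; apply/imsetP => -[S _ /setP /(_ None)].
by rewrite /addN !inE eqxx.
Qed.

Lemma has_card_lang : has_card (@pes_lang _ Pn) n`!.
Proof.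
exists (permutations (enum 'I_n)); split; first exact: permutations_uniq.
split; first by rewrite size_permutations ?enum_uniq // size_enum_ord.
move=> w; rewrite lang_iff mem_permutations; split.
- move=> [Hu Hs]; apply: uniq_perm => //; first exact: enum_uniq.
  by move=> x; rewrite mem_enum all_mem_size.
- move=> Hp; split; first by rewrite (perm_uniq Hp) enum_uniq.
  by rewrite (perm_size Hp) size_enum_ord.
Qed.

Lemma enum_word_ok (S T : {set 'I_n}) :
  uniq (enum S ++ enum (~: T)) /\ size (enum S ++ enum (~: T)) = n -> S = T.
Proof.
move=> [Hu Hs].
move: Hu; rewrite cat_uniq => /and3P [_ Hd _].
have sub : S \subset T.
  apply/subsetP => x xS; apply/negPn/negP => xT.
  move/hasP: Hd; apply; exists x; first by rewrite mem_enum inE.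
  by rewrite /= mem_enum.
move: Hs; rewrite size_cat -!cardE => Hs.
have HT := cardsC T; rewrite card_ord in HT.
have Hc : #|S| = #|T|.
  move: Hs HT; move: #|S| #|T| #|~: T| => a b c H1 H2.
  by apply/eqP; rewrite -(eqn_add2r c) H1 H2.
by apply/eqP; rewrite eqEcard sub Hc leqnn.
Qed.
End Constr.

Lemma split_run (X Y : Type) (s : seq (option X * Y)) (u v : seq X) :
  pmap fst s = u ++ v ->
  exists s1 s2, s = s1 ++ s2 /\ pmap fst s1 = u /\ pmap fst s2 = v.
Proof.
elim: s u => [|[[x|] y] s IH] u /=.
- by case: u => //= <-; exists [::], [::].
- case: u => [|a u] /=.
    by move=> <-; exists [::], ((Some x, y) :: s).
  move=> [-> /IH [s1 [s2 [-> [H1 H2]]]]].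
  by exists ((Some a, y) :: s1), s2; rewrite /= H1.
- move=> /IH [s1 [s2 [-> [H1 H2]]]].
  by exists ((None, y) :: s1), s2.
Qed.

Section Lower.
Variable n : nat.
Variable A : nfa 'I_n.
Hypothesis HA : forall w, nfa_lang A w <-> pes_lang (Pn n) w.

Let e := fun p q : option 'I_n * nfa_Q A => nfa_delta p.2 q.1 q.2.

Lemma path_snd p p' s : p.2 = p'.2 -> path e p s = path e p' s.
Proof. by case: s => //= y s' H; rewrite /e H. Qed.

Definition Rel (S : {set 'I_n}) (q : nfa_Q A) : Prop :=
  exists s1 s2, path e (None, @nfa_q0 _ A) s1 /\ (last (None, @nfa_q0 _ A) s1).2 = q /\
    pmap fst s1 = enum S /\ path e (last (None, @nfa_q0 _ A) s1) s2 /\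
    @nfa_F _ A (last q (map snd s2)) /\ pmap fst s2 = enum (~: S).

Lemma last_snd (s1 : seq (option 'I_n * nfa_Q A)) :
  last (@nfa_q0 _ A) (map snd s1) = (last (None, @nfa_q0 _ A) s1).2.
Proof. exact: (last_map snd s1 (None, @nfa_q0 _ A)). Qed.

Lemma Rel_ex S : exists q, Rel S q.
Proof.
have : nfa_lang A (enum S ++ enum (~: S)).
  apply/HA/lang_iff; split.
    rewrite cat_uniq !enum_uniq /= andbT; apply/hasPn => x.
    by rewrite !mem_enum inE.
  rewrite size_cat -!cardE.
  have := cardsC S; rewrite card_ord; exact.
move=> [s [Hp [HF Hw]]].
have [s1 [s2 [Es [H1 H2]]]] := split_run (esym Hw).
subst s; move: Hp; rewrite cat_path => /andP [P1 P2].
exists (last (None, @nfa_q0 _ A) s1).2, s1, s2; do 5 (split => //).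
by move: HF; rewrite map_cat last_cat last_snd.
Qed.

Lemma Rel_inj S T q : Rel S q -> Rel T q -> S = T.
Proof.
move=> [s1 [_ [P1 [L1 [W1 _]]]]] [t1 [t2 [_ [L2 [_ [P2 [F2 W2]]]]]]].
apply: enum_word_ok; apply/lang_iff/HA.
exists (s1 ++ t2); split.
  rewrite cat_path P1 /=.
  by rewrite (@path_snd (last (None, @nfa_q0 _ A) s1) (last (None, @nfa_q0 _ A) t1)) ?P2 // L1 L2.
split; last by rewrite pmap_cat W1 W2.
by rewrite map_cat last_cat last_snd L1.
Qed.

Lemma lower : 2 ^ n <= #|nfa_Q A|.
Proof.
pose f S := proj1_sig (constructive_indefinite_description _ (Rel_ex S)).
have Hf S : Rel S (f S) := proj2_sig (constructive_indefinite_description _ (Rel_ex S)).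
have inj : injective f.
  by move=> S T H; apply: (Rel_inj (Hf S)); rewrite H.
by rewrite -card_sets_ord; apply: leq_card inj.
Qed.
End Lower.

Theorem theorem5 :
  forall n : nat, 1 <= n ->
  exists (Sigma : finType) (P : pes Sigma),
    #|ev P| = n.+1 /\
    has_card (pes_lang P) n`! /\
    #|nfa_Q (enc_nfa P)| = 2 ^ n + 1 /\
    (forall A : nfa Sigma,
       (forall w, nfa_lang A w <-> pes_lang P w) -> 2 ^ n <= #|nfa_Q A|).
Proof.
move=> n _; exists 'I_n, (Pn n); split.
  by rewrite /= card_option card_ord.
split; first exact: has_card_lang.
split; first exact: card_Q.
by move=> A HA; exact: lower HA.
Qed.
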